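(* Let $n>1$, let $G_1,\dots,G_n$ be finite simple graphs and $G=G_1\,\square\,\cdots\,\square\,G_n$ their Cartesian product. (1) If for each $i$ there is an automorphism $\sigma_i$ of $G_i$ of order $2$ with $\sigma_i(v)\neq v$ and $v\sigma_i(v)\notin E(G_i)$ for all $v\in V(G_i)$, then $G$ is a $\mathcal{P}$ position for Grim. (2) If for each $i$, $G_i$ has no isolated vertices and there is an automorphism $\sigma_i$ of $G_i$ of order $2$ fixing exactly one vertex of $G_i$ and with $v\sigma_i(v)\notin E(G_i)$ for all $v\in V(G_i)$, then $G$ is an $\mathcal{N}$ position for Grim.
   Context: Grim is a two-player game on a finite simple undirected graph. Any isolated vertices of the starting graph are deleted before play begins. Players alternate moves; a move consists of selecting a vertex of the current graph and deleting it together with all its incident edges, after which every vertex that has become isolated is also deleted. The player who makes the last legal move wins (a player facing the empty graph has no move and loses). A graph is an $\mathcal{N}$ position if the player about to move has a winning strategy, and a $\mathcal{P}$ position otherwise. The Cartesian product $G\square H$ has vertex set $V(G)\times V(H)$, with $(x,y)$ adjacent to $(w,z)$ iff either $x=w$ and $yz\in E(H)$, or $y=z$ and $xw\in E(G)$; the iterated product is defined analogously. *)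

(* Defs.v *)
From mathcomp Require Import all_boot all_fingroup.
Set Implicit Arguments. Unset Strict Implicit. Unset Printing Implicit Defensive.

Definition simple_graph (T : finType) (e : rel T) : Prop :=
  symmetric e /\ irreflexive e.

(* Positions of Grim on a graph (T, e): the current graph is the subgraph
   induced on a vertex set S : {set T} (with no isolated vertices). *)

Definition grim_start (T : finType) (e : rel T) : {set T} :=
  [set u | [exists w, e u w]].

Definition grim_move (T : finType) (e : rel T) (S : {set T}) (v : T) : {set T} :=
  [set u in S :\ v | [exists w in S :\ v, e u w]].

(* N / P positions (normal play), defined inductively; since every move
   strictly decreases the vertex set, this is the usual game-theoretic
   classification. *)
Inductive grim_P (T : finType) (e : rel T) : {set T} -> Prop :=
  | grimP_intro (S : {set T}) : (forall v, v \in S -> grim_N e (grim_move e S v)) -> grim_P e S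
with grim_N (T : finType) (e : rel T) : {set T} -> Prop :=
  | grimN_intro (S : {set T}) (v : T) : v \in S -> grim_P e (grim_move e S v) -> grim_N e S.

Definition cart_prod_rel (n : nat) (T : 'I_n -> finType)
    (e : forall i, rel (T i)) : rel {dffun forall i : 'I_n, T i} :=
  fun x y => [exists i : 'I_n, e i (x i) (y i) &&
                 [forall j : 'I_n, (j != i) ==> (x j == y j)]].

Definition graph_aut (T : finType) (e : rel T) (s : {perm T}) : Prop :=
  forall u v, e (s u) (s v) = e u v.

(* Main.v *)
Require Import Defs.
From mathcomp Require Import all_boot all_fingroup.
From Stdlib Require Import ClassicalEpsilon.
Set Implicit Arguments. Unset Strict Implicit. Unset Printing Implicit Defensive.

Section Gen.
Variables (T : finType) (e : rel T) (esym : symmetric e).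

Lemma move2 S v v' : grim_move e (grim_move e S v) v' =
  [set u in S :\ v :\ v' | [exists w in S :\ v :\ v', e u w]].
Proof.
apply/setP=> u; rewrite /grim_move !inE; apply/andP/andP.
- move=> [/and3P[uv' /andP[uv uS] _] /existsP[w /andP[wS1 euw]]].
  move: wS1; rewrite !inE => /andP[wv' /andP[/andP[wv wS] _]].
  split; first by rewrite uv' uv uS.
  by apply/existsP; exists w; rewrite !inE wv' wv wS euw.
- move=> [/and3P[uv' uv uS] /existsP[w /andP[wS euw]]].
  move: wS; rewrite !inE => /and3P[wv' wv wS].
  split.
    rewrite uv' uv uS /=; apply/existsP; exists w.
    by rewrite !inE wv wS euw.
  apply/existsP; exists w; rewrite !inE wv' wv wS /=.
  rewrite euw andbT; apply/existsP; exists u; by rewrite !inE uv uS esym euw.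
Qed.

Variable (sg : T -> T).
Hypothesis sgK : forall u, sg (sg u) = u.
Hypothesis sgA : forall u w, e (sg u) (sg w) = e u w.
Hypothesis sgN : forall u, ~~ e u (sg u).

Definition inv (S : {set T}) :=
  (forall u, u \in S -> sg u \in S) /\ (forall u, u \in S -> sg u != u) /\
  (forall u, u \in S -> exists2 w, w \in S & e u w).

Lemma sg_inj : injective sg.
Proof. exact: (can_inj sgK). Qed.

Lemma key k (S : {set T}) : #|S| <= k -> inv S -> grim_P e S.
Proof.
elim: k S => [|k IH] S cS [Si [Sf Sn]].
  constructor=> v vS; exfalso; move: cS; rewrite leqn0 => /eqP/cards0_eq S0.
  by rewrite S0 inE in vS.
constructor=> v vS; apply: (@grimN_intro _ _ _ (sg v)).
  have [w wS ew] := Sn _ (Si _ vS).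
  have wv : w != v.
    by apply/eqP=> wv; subst w; move: (sgN (sg v)); rewrite sgK ew.
  rewrite /grim_move !inE (Sf _ vS) (Si _ vS) /=; apply/existsP; exists w.
  by rewrite !inE wv wS ew.
rewrite move2; apply: IH.
  rewrite -ltnS; apply: leq_trans cS.
  apply: (@leq_ltn_trans #|S :\ v|); last by rewrite (cardsD1 v S) vS.
  apply: subset_leq_card; apply/subsetP=> u; rewrite !inE.
  by case/andP=> /andP[_ ->].
split; [|split].
- move=> u; rewrite !inE => /andP[/andP[uv' /andP[uv uS]] /existsP[w /andP[wS euw]]].
  move: wS; rewrite !inE => /andP[wv' /andP[wv wS]].
  rewrite (inj_eq sg_inj) uv (Si _ uS) andbT.
  rewrite -[v in sg u != v]sgK (inj_eq sg_inj) uv' /=.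
  apply/existsP; exists (sg w); rewrite !inE sgA euw (inj_eq sg_inj) wv (Si _ wS) andbT.
  by rewrite -[v in sg w != v]sgK (inj_eq sg_inj) wv'.
- move=> u; rewrite !inE => /andP[/andP[_ /andP[_ uS]] _]; exact: Sf.
- move=> u; rewrite !inE => /andP[/andP[uv' /andP[uv uS]] /existsP[w /andP[wS euw]]].
  exists w => //; move: wS; rewrite !inE => /andP[wv' /andP[wv wS]].
  rewrite wv' wv wS /=; apply/existsP; exists u; by rewrite !inE uv' uv uS esym euw.
Qed.

Lemma gen1 : (forall u, sg u != u) -> grim_P e (grim_start e).
Proof.
move=> fpf; apply: (@key #|grim_start e|) => //; split; [|split].
- move=> u; rewrite !inE => /existsP[w euw]; apply/existsP; exists (sg w); by rewrite sgA.
- by move=> u _.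
- move=> u; rewrite !inE => /existsP[w euw]; exists w => //.
  by rewrite inE; apply/existsP; exists u; rewrite esym.
Qed.

Lemma gen2 x0 : (forall u, (sg u == u) = (u == x0)) -> (exists w, e x0 w) ->
  grim_N e (grim_start e).
Proof.
move=> fx [w0 ew0]; apply: (@grimN_intro _ _ _ x0).
  by rewrite inE; apply/existsP; exists w0.
have sx0 : sg x0 = x0 by apply/eqP; rewrite fx.
have sne u : u != x0 -> sg u != x0.
  by move=> ux; rewrite -[x0 in _ != x0]sx0 (inj_eq sg_inj).
apply: (@key #|grim_move e (grim_start e) x0|) => //; split; [|split].
- move=> u; rewrite !inE => /andP[/andP[ux _] /existsP[w /andP[wS euw]]].
  move: wS; rewrite !inE => /andP[wx _].
  rewrite sne //=; apply/andP; split.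
    by apply/existsP; exists (sg w); rewrite sgA.
  apply/existsP; exists (sg w); rewrite sgA euw !inE sne //=.
  by rewrite andbT; apply/existsP; exists (sg u); rewrite sgA esym.
- by move=> u; rewrite /grim_move !inE fx => /andP[/andP[]].
- move=> u; rewrite /grim_move !inE => /andP[/andP[ux uS] /existsP[w /andP[wS euw]]].
  exists w => //; move: wS; rewrite !inE => /andP[wx wS].
  rewrite wx wS /=; apply/existsP; exists u; by rewrite !inE ux uS esym euw.
Qed.
End Gen.
Unset Implicit Arguments.

Section Prod.
Variables (n : nat) (T : 'I_n -> finType) (e : forall i, rel (T i)).
Hypothesis esg : forall i, simple_graph (e i).
Variable s : forall i, {perm T i}.
Hypothesis sK : forall i v, s i (s i v) = v.
Hypothesis sA : forall i, graph_aut (e i) (s i).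
Hypothesis sN : forall i v, ~~ e i v (s i v).

Definition PT := {dffun forall i : 'I_n, T i}.
Definition psg (x : PT) : PT := finfun (fun i => s i (x i)).

Lemma psgE x i : psg x i = s i (x i).
Proof. by rewrite /psg ffunE. Qed.

Lemma psym : symmetric (cart_prod_rel e).
Proof.
move=> x y; rewrite /cart_prod_rel; apply/existsP/existsP=> [][i /andP[ei /forallP fj]];
 exists i; rewrite (proj1 (esg i)) ei /=; apply/forallP=> j;
 by apply/implyP=> ji; rewrite eq_sym (implyP (fj j) ji).
Qed.

Lemma psgK x : psg (psg x) = x.
Proof. by apply/ffunP=> i; rewrite !psgE sK. Qed.

Lemma psgA x y : cart_prod_rel e (psg x) (psg y) = cart_prod_rel e x y.
Proof.
rewrite /cart_prod_rel; apply: eq_existsb => i; rewrite !psgE sA; congr (_ && _).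
apply: eq_forallb => j; by rewrite !psgE (inj_eq (@perm_inj _ _)).
Qed.

Lemma psgN x : ~~ cart_prod_rel e x (psg x).
Proof.
apply/existsP=> [][i /andP[ei _]]; by move: (sN i (x i)); rewrite -psgE ei.
Qed.
End Prod.

Lemma ord2K (U : finType) (p : {perm U}) : #[p]%g = 2 -> forall v, p (p v) = v.
Proof.
move=> h v; have := expg_order p; rewrite h expgS expg1 => /(congr1 (fun q : {perm U} => q v)).
by rewrite permM perm1.
Qed.

Theorem corollary4p6 (n : nat) (T : 'I_n -> finType) (e : forall i, rel (T i)) :
  1 < n ->
  (forall i, simple_graph (e i)) ->
  ((forall i, exists s : {perm T i},
       [/\ graph_aut (e i) s, #[s]%g = 2,
           forall v, s v != v &
           forall v, ~~ e i v (s v)]) ->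
     grim_P (cart_prod_rel e) (grim_start (cart_prod_rel e)))
  /\
  ((forall i, (forall v : T i, exists w, e i v w) /\
     exists s : {perm T i},
       [/\ graph_aut (e i) s, #[s]%g = 2,
           #|[set v | s v == v]| = 1 &
           forall v, ~~ e i v (s v)]) ->
     grim_N (cart_prod_rel e) (grim_start (cart_prod_rel e))).
Proof.
move=> n1 esg; pose i0 : 'I_n := Ordinal (ltnW n1).
split.
  move=> H; pose s i := proj1_sig (constructive_indefinite_description _ (H i)).
  have hs i : [/\ graph_aut (e i) (s i), #[s i]%g = 2,
           forall v, s i v != v & forall v, ~~ e i v (s i v)].
    exact: proj2_sig (constructive_indefinite_description _ (H i)).
  have sK i : forall v, s i (s i v) = v by case: (hs i) => _ h _ _; exact: ord2K.
  have sA i : graph_aut (e i) (s i) by case: (hs i).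
  have sN i : forall v, ~~ e i v (s i v) by case: (hs i).
  apply: (gen1 (@psym _ _ _ esg) (@psgK _ _ _ sK) (@psgA _ _ _ _ sA) (@psgN _ _ _ _ sN)).
  move=> x; apply/eqP=> /ffunP/(_ i0); rewrite psgE; apply/eqP.
  by case: (hs i0).
move=> H; pose s i := proj1_sig (constructive_indefinite_description _ (proj2 (H i))).
have hs i : [/\ graph_aut (e i) (s i), #[s i]%g = 2,
           #|[set v | s i v == v]| = 1 & forall v, ~~ e i v (s i v)].
  exact: proj2_sig (constructive_indefinite_description _ (proj2 (H i))).
have sK i : forall v, s i (s i v) = v by case: (hs i) => _ h _ _; exact: ord2K.
have sA i : graph_aut (e i) (s i) by case: (hs i).
have sN i : forall v, ~~ e i v (s i v) by case: (hs i).
have hc i : exists c, [set v | s i v == v] = [set c].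
  by apply/cards1P; case: (hs i) => _ _ -> _.
pose c i := proj1_sig (constructive_indefinite_description _ (hc i)).
have cE i v : (s i v == v) = (v == c i).
  have := proj2_sig (constructive_indefinite_description _ (hc i)) => /setP/(_ v).
  by rewrite !inE.
pose x0 : PT n T := finfun c.
apply: (gen2 (@psym _ _ _ esg) (@psgK _ _ _ sK) (@psgA _ _ _ _ sA) (@psgN _ _ _ _ sN) (x0 := x0)).
  move=> u; apply/eqP/eqP=> [hu|->].
    apply/ffunP=> i; rewrite ffunE; apply/eqP; rewrite -cE.
    by rewrite -[in X in X == _]psgE hu.
  apply/ffunP=> i; rewrite psgE ffunE; apply/eqP; by rewrite cE.
have [w0 ew0] := proj1 (H i0) (c i0).
exists (finfun (dfwith c w0) : PT n T).
apply/existsP; exists i0; rewrite !ffunE dfwith_in ew0 /=.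
apply/forallP=> j; apply/implyP=> ji; rewrite !ffunE dfwith_out //.
by rewrite eq_sym.
Qed.
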